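(* Let $G$ be a finite group acting transitively on a finite set $\mathsf X$, fix $x_0\in\mathsf X$, let $H=\{g\in G: gx_0=x_0\}$, and choose representatives $k_x\in G$ ($x\in\mathsf X$) with $k_xx_0=x$ and $k_{x_0}=e$. Let $\psi:H\times H\to U(1)$ be a 2-cocycle, i.e. $\psi(a,bc)\psi(b,c)=\psi(a,b)\psi(ab,c)$ for all $a,b,c\in H$. Define $L:G\times G\times\mathsf X\to U(1)$ by $$L^x_{g_1,g_2}=\psi(h_1,h_2),\qquad h_1=k_{g_1g_2x}^{-1}\,g_1\,k_{g_2x},\quad h_2=k_{g_2x}^{-1}\,g_2\,k_x\ (\in H).$$ Then $L$ is block independent if and only if $\psi$ extends to $G$, i.e. there exists a 2-cocycle $\Psi:G\times G\to\mathbb{C}^\times$ (equivalently, one with values in $U(1)$) whose restriction to $H\times H$ equals $\psi$.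
   Context: A gauge transformation is a pair of functions $\beta:G\times G\to\mathbb{C}^\times$, $\gamma:G\times\mathsf X\to\mathbb{C}^\times$ ($(g,x)\mapsto\gamma^x_g$); it maps $L$ to $L'^x_{g,h}=\dfrac{\beta_{g,h}\,\gamma^x_{gh}}{\gamma^{hx}_{g}\,\gamma^x_h}L^x_{g,h}$. For a family $L$ define $\ell^x_{a,b;g}=L^x_{ag,g^{-1}b}/L^x_{a,b}$. $L$ is called block independent if there is a gauge transformation such that the transformed quantities $\ell'^x_{a,b;g}$ are independent of $x\in\mathsf X$ for all $a,b,g\in G$. A 2-cocycle $\Psi:G\times G\to\mathbb{C}^\times$ satisfies $\Psi(a,bc)\Psi(b,c)=\Psi(a,b)\Psi(ab,c)$ for all $a,b,c\in G$. *)

(* Defs.v *)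
(* finite group gT (the whole type plays the role of G),
   finite set X, complex numbers C := R[i] for R : realType. *)
From HB Require Import structures.
From mathcomp Require Import all_boot all_algebra all_fingroup.
From mathcomp Require Import reals complex.
Set Implicit Arguments. Unset Strict Implicit. Unset Printing Implicit Defensive.
Import GRing.Theory Num.Theory.
Local Open Scope ring_scope.

Section Defs.
Variables (R : realType) (gT : finGroupType) (X : finType).
Local Notation C := (R[i]).

Definition is_left_action (act : gT -> X -> X) : Prop :=
  (forall x, act 1%g x = x) /\
  (forall g h x, act (g * h)%g x = act g (act h x)).

Definition transitive_action (act : gT -> X -> X) : Prop :=
  forall x y, exists g, act g x = y.

Definition stab (act : gT -> X -> X) (x0 : X) : {set gT} :=
  [set g | act g x0 == x0].

Definition gauge (beta : gT -> gT -> C) (gamma : gT -> X -> C)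
  (act : gT -> X -> X) (L : X -> gT -> gT -> C) : X -> gT -> gT -> C :=
  fun x g h => beta g h * gamma (g * h)%g x / (gamma g (act h x) * gamma h x)
               * L x g h.

Definition ell (L : X -> gT -> gT -> C) (x : X) (a b g : gT) : C :=
  L x (a * g)%g (g^-1 * b)%g / L x a b.

Definition block_independent (act : gT -> X -> X) (L : X -> gT -> gT -> C) : Prop :=
  exists (beta : gT -> gT -> C) (gamma : gT -> X -> C),
    (forall g h, beta g h != 0) /\ (forall g x, gamma g x != 0) /\
    (forall a b g x y, ell (gauge beta gamma act L) x a b g =
                       ell (gauge beta gamma act L) y a b g).

Definition L_of (act : gT -> X -> X) (k : X -> gT) (psi : gT -> gT -> C)
  : X -> gT -> gT -> C :=
  fun x g1 g2 =>
    psi ((k (act (g1 * g2)%g x))^-1 * g1 * k (act g2 x))%g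
        ((k (act g2 x))^-1 * g2 * k x)%g.

End Defs.

(* Main.v *)
Require Import Defs.
From HB Require Import structures.
From mathcomp Require Import all_boot all_algebra all_fingroup.
From mathcomp Require Import reals complex.
From mathcomp Require Import ring.
Import GRing.Theory Num.Theory.
Local Open Scope ring_scope.

Ltac fld := field; repeat (apply/andP; split); try assumption.

Lemma key_id (F : comNzRingType) (p1 p2 p3 p4 q1 q2 q3 q4 r1 r2 : F) :
  r2*p2 = q1*q2 -> r2*q4 = p1*r1 -> p3*p4 = q3*r1 ->
  p1*p2*(p3*p4) = q1*q2*(q3*q4).
Proof.
move=> e1 e2 e3; rewrite e3.
transitivity (p2*q3*(p1*r1)); first by ring.
rewrite -e2.
transitivity (q3*q4*(r2*p2)); first by ring.
rewrite e1; ring.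
Qed.

Lemma fld1 (F : fieldType) (a b c d e f l1 l2 l3 l4 : F) :
  b != 0 -> c != 0 -> d != 0 -> e != 0 -> f != 0 -> l1*l2 = l3*l4 ->
  a/(b*c)*l1 * (c/(d*e)*l2) = f/(b*d)*l3 * (a/(f*e)*l4).
Proof.
move=> hb hc hd he hf E.
transitivity (a/(b*d*e) * (l1*l2)); first by fld.
rewrite E; fld.
Qed.

Lemma canc (F : fieldType) (p q r s t u : F) :
  p != 0 -> q != 0 -> p*r/(q*s) = p*t/(q*u) -> r/s = t/u.
Proof.
move=> hp hq; rewrite -!mulf_div; apply: mulfI.
by rewrite mulf_neq0 ?invr_eq0.
Qed.

Lemma div_swap (F : fieldType) (k1 k2 m1 m2 : F) :
  k2 != 0 -> m1 != 0 -> m2 != 0 -> k1/m1 = k2/m2 -> m1 = m2*k1/k2.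
Proof.
move=> ? ? ? /eqP; rewrite eqr_div // => /eqP E.
apply: (mulIf (x := k2)) => //; rewrite divfK //.
by rewrite [m1*k2]mulrC -E mulrC.
Qed.


Lemma fld2 (F : fieldType) (A1 A2 A3 A4 K0 Ky Kz Kw fa fb fc fab fbc fabc : F) :
  K0 != 0 -> Ky != 0 -> fbc != 0 -> fab != 0 -> fabc != 0 ->
  (A1*Ky/K0)*(A2*Ky/K0) = (A3*Kz/K0)*(A4*Ky/K0) ->
  (A1/K0*Ky*(fa*fbc/fabc))*(A2/K0*Kw*(fb*fc/fbc))
  = (A3/K0*Kz*(fa*fb/fab))*(A4/K0*Kw*(fab*fc/fabc)).
Proof.
move=> h1 h2 h3 h4 h5 E.
transitivity ((A1*Ky/K0)*(A2*Ky/K0) * (Kw*fa*fb*fc/(fabc*Ky))); first by fld.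
rewrite E; fld.
Qed.

Arguments fld2 {F A1 A2 A3 A4 K0 Ky Kz Kw fa fb fc fab fbc fabc}.

Lemma gl (gT : finGroupType) (a b c d e : gT) :
  (a*b*c * (c^-1*d*e) = a*(b*d)*e)%g.
Proof. by rewrite !mulgA mulgK. Qed.

Section Main.
Variables (R : realType) (gT : finGroupType) (X : finType).
Local Notation C := (R[i]).
Variables (act : gT -> X -> X) (x0 : X) (k : X -> gT) (psi : gT -> gT -> C).
Hypothesis Hact : is_left_action act.
Hypothesis Hk : forall x, act (k x) x0 = x.
Hypothesis Hk0 : k x0 = 1%g.
Hypothesis Hpsi : forall a b, a \in stab act x0 -> b \in stab act x0 -> `|psi a b| = 1.
Hypothesis Hcoc : forall a b c, a \in stab act x0 -> b \in stab act x0 -> c \in stab act x0 ->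
     psi a (b * c)%g * psi b c = psi a b * psi (a * b)%g c.

Let L := L_of act k psi.

Lemma act1 x : act 1%g x = x. Proof. by case: Hact. Qed.
Lemma actM g h x : act (g*h)%g x = act g (act h x). Proof. by case: Hact. Qed.
Lemma act_inv g x y : act g y = x -> act g^-1 x = y.
Proof. by move<-; rewrite -actM mulVg act1. Qed.

Lemma rho_in g x : ((k (act g x))^-1 * g * k x)%g \in stab act x0.
Proof. rewrite inE !actM Hk; apply/eqP; apply: act_inv; by rewrite Hk. Qed.

Lemma h1_in g1 g2 x :
  ((k (act (g1*g2) x))^-1 * g1 * k (act g2 x))%g \in stab act x0.
Proof. rewrite actM; exact: rho_in. Qed.

Lemma psi_neq0 a b : a \in stab act x0 -> b \in stab act x0 -> psi a b != 0.
Proof.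
move=> ha hb; apply/eqP => E; move: (Hpsi a b ha hb); rewrite E normr0 => /eqP.
by rewrite eq_sym oner_eq0.
Qed.

Lemma L_neq0 x g h : L x g h != 0.
Proof. by rewrite /L /L_of psi_neq0 ?h1_in ?rho_in. Qed.

Lemma L_coc x g1 g2 g3 :
  L x g1 (g2*g3)%g * L x g2 g3 = L (act g3 x) g1 g2 * L x (g1*g2)%g g3.
Proof.
rewrite /L /L_of !actM.
set z3 := act g3 x; set z2 := act g2 z3; set z1 := act g1 z2.
rewrite -(gl _ ((k z2)^-1)%g g2 (k z3) g3 (k x)) -(gl _ ((k z1)^-1)%g g1 (k z2) g2 (k z3)).
by apply: Hcoc; [exact: (rho_in g1 z2) | exact: (rho_in g2 z3) | exact: (rho_in g3 x)].
Qed.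


Lemma back (Psi : gT -> gT -> C) :
  (forall a b, Psi a b != 0) ->
  (forall a b c, Psi a (b * c)%g * Psi b c = Psi a b * Psi (a * b)%g c) ->
  (forall a b, a \in stab act x0 -> b \in stab act x0 -> Psi a b = psi a b) ->
  block_independent act L.
Proof.
move=> Pnz PC Pext.
exists (fun _ _ => 1), (fun g x => Psi (k (act g x)) ((k (act g x))^-1 * g * k x)%g / Psi g (k x)).
split; first by move=> *; exact: oner_neq0.
split; first by move=> g x; rewrite mulf_neq0 ?invr_eq0.
suff E : forall x g h, gauge (fun _ _ => 1)
    (fun g x => Psi (k (act g x)) ((k (act g x))^-1 * g * k x)%g / Psi g (k x)) act L x g h
    = Psi g h.
  by move=> a b g x y; rewrite /ell !E.
move=> x g h; rewrite /gauge /L /L_of.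
rewrite -Pext; [| exact: h1_in | exact: rho_in].
rewrite !actM.
set z := act h x; set y := act g z.
have e1 := PC g h (k x).
have e2 := PC g (k z) ((k z)^-1 * h * k x)%g.
have e3 := PC (k y) ((k y)^-1 * g * k z)%g ((k z)^-1 * h * k x)%g.
have g1 : (k z * ((k z)^-1 * h * k x) = h * k x)%g by rewrite !mulgA mulgV mul1g.
have g2 : (g * k z = k y * ((k y)^-1 * g * k z))%g by rewrite !mulgA mulgV mul1g.
have g3 : (((k y)^-1 * g * k z) * ((k z)^-1 * h * k x) = (k y)^-1 * (g * h) * k x)%g
  by rewrite gl.
rewrite g1 g2 in e2; rewrite g3 in e3.
have K := @key_id _ _ _ _ _ _ _ _ _ _ _ e1 e2 e3.
set p1 := Psi g (k z) in K *; set p2 := Psi h (k x) in K *.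
set p3 := Psi (k y) _ in K *.
set p4 := Psi ((k y)^-1 * g * k z)%g _ in K *.
set q1 := Psi g h in K *; set q2 := Psi (g * h)%g (k x) in K *.
set q3 := Psi (k y) ((k y)^-1 * g * k z)%g in K *.
set q4 := Psi (k z) _ in K *.
transitivity (p1*p2*(p3*p4)/(q2*(q3*q4))).
  have := Pnz g (k z); have := Pnz h (k x); have := Pnz (g*h)%g (k x).
  have := Pnz (k y) ((k y)^-1 * g * k z)%g; have := Pnz (k z) ((k z)^-1 * h * k x)%g.
  rewrite -/p1 -/p2 -/q2 -/q3 -/q4 => h1 h2 h3 h4 h5; fld.
rewrite K.
have := Pnz (g*h)%g (k x).
have := Pnz (k y) ((k y)^-1 * g * k z)%g; have := Pnz (k z) ((k z)^-1 * h * k x)%g.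
rewrite -/q2 -/q3 -/q4 => h1 h2 h3; fld.
Qed.

Lemma fwd : block_independent act L ->
  exists Psi : gT -> gT -> C,
    (forall a b, Psi a b != 0) /\
    (forall a b c, Psi a (b * c)%g * Psi b c = Psi a b * Psi (a * b)%g c) /\
    (forall a b, a \in stab act x0 -> b \in stab act x0 -> Psi a b = psi a b).
Proof.
case=> beta [gamma [Bnz [Gnz Hell]]].
pose M := gauge (fun _ _ => 1) gamma act L.
have LM : forall x g h, gauge beta gamma act L x g h = beta g h * M x g h.
  by move=> x g h; rewrite /M /gauge mul1r !mulrA.
have Mnz : forall x g h, M x g h != 0.
  by move=> x g h; rewrite /M /gauge mul1r !mulf_neq0 ?invr_eq0 ?mulf_neq0 ?L_neq0 ?Gnz.
have Mcoc : forall x g1 g2 g3,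
    M x g1 (g2*g3)%g * M x g2 g3 = M (act g3 x) g1 g2 * M x (g1*g2)%g g3.
  move=> x g1 g2 g3; rewrite /M /gauge !mul1r.
  rewrite [(g1*(g2*g3))%g]mulgA [act (g2*g3)%g x]actM.
  by apply: fld1; rewrite ?mulf_neq0 ?L_coc.
have M1 : forall x g, M x g 1%g = M x 1%g 1%g.
  move=> x g; have := Mcoc x g 1%g 1%g; rewrite !mulg1 act1 => E.
  by apply/esym; apply: (mulfI (Mnz x g 1%g)).
have Mell : forall x y a b g, M x (a*g)%g (g^-1*b)%g / M x a b
                            = M y (a*g)%g (g^-1*b)%g / M y a b.
  move=> x y a b g; have := Hell a b g x y; rewrite /ell !LM.
  by apply: canc.
have MK : forall x a b, M x a b = M x0 a b * M x 1%g 1%g / M x0 1%g 1%g.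
  move=> x a b; have := Mell x x0 a b b; rewrite mulVg !M1.
  by apply: div_swap.
pose K x := M x 1%g 1%g.
pose f g := gamma g x0.
have Knz x : K x != 0 by exact: Mnz. have fnz g : f g != 0 by exact: Gnz.
exists (fun a b => M x0 a b / K x0 * K (act b^-1 x0)%g * (f a * f b / f (a*b)%g)).
split.
  by move=> a b; repeat (apply: Mnz || apply: Knz || apply: fnz || apply: mulf_neq0 || apply: invr_neq0).
split.
  move=> g1 g2 g3 /=.
  rewrite -[(g1*g2*g3)%g]mulgA.
  set y := act (g2*g3)^-1%g x0.
  have hy : act g3 y = act g2^-1%g x0.
    by rewrite /y -actM invMg mulgA mulgV mul1g.
  have := Mcoc y g1 g2 g3; rewrite hy.
  rewrite (MK y g1) (MK y g2) (MK y (g1*g2)%g) (MK (act g2^-1%g x0) g1).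
  rewrite -/(K y) -/(K x0) -/(K (act g2^-1%g x0)) => E.
  exact: (fld2 (Knz _) (Knz _) (fnz _) (fnz _) (fnz _) E).
move=> a b ha hb /=.
have hb' : act b x0 = x0 by move: hb; rewrite inE => /eqP.
have ha' : act a x0 = x0 by move: ha; rewrite inE => /eqP.
rewrite (act_inv b x0 x0 hb') /M /gauge /L /L_of actM hb' ha' Hk0 invg1 !mul1g !mulg1.
rewrite /f; fld; first [exact: Gnz | exact: Knz].
Qed.

End Main.

Theorem mainTheorem8 (R : realType) (gT : finGroupType) (X : finType)
  (act : gT -> X -> X) (x0 : X) (k : X -> gT) (psi : gT -> gT -> R[i]) :
  is_left_action act ->
  transitive_action act ->
  (forall x, act (k x) x0 = x) -> k x0 = 1%g ->
  (forall a b, a \in stab act x0 -> b \in stab act x0 -> `|psi a b| = 1) ->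
  (forall a b c, a \in stab act x0 -> b \in stab act x0 -> c \in stab act x0 ->
     psi a (b * c)%g * psi b c = psi a b * psi (a * b)%g c) ->
  block_independent act (L_of act k psi) <->
  exists Psi : gT -> gT -> R[i],
    (forall a b, Psi a b != 0) /\
    (forall a b c, Psi a (b * c)%g * Psi b c = Psi a b * Psi (a * b)%g c) /\
    (forall a b, a \in stab act x0 -> b \in stab act x0 -> Psi a b = psi a b).
Proof.
move=> Hact Htr Hk Hk0 Hpsi Hcoc; split.
  by apply: fwd.
by move=> [Psi [Pnz [PC Pext]]]; apply: back Pnz PC Pext.
Qed.
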